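(* Let $C=L_1;\ldots;L_d$ be a sorting network of depth $d\ge2$ on $n$ channels containing no redundant comparators. Then every comparator $(i,j)\in L_{d-1}$ connects adjacent blocks of $C$; that is, every channel $m$ with $i<m<j$ belongs either to the block containing $i$ or to the block containing $j$.
   Context: Channels are numbered $1,\ldots,n$. A comparator network of depth $d$ is a sequence $C=L_1;\ldots;L_d$ of layers; each layer is a set of comparators $(i,j)$ with $1\le i<j\le n$, each channel occurring in at most one comparator of a layer. An input $\bar x\in\{0,1\}^n$ propagates: $\bar x_0=\bar x$, and $\bar x_k$ is obtained from $\bar x_{k-1}$ by, for each $(i,j)\in L_k$, putting the minimum of the values at positions $i,j$ at position $i$ and the maximum at position $j$. The output is $C(\bar x)=\bar x_d$; $C$ is a sorting network if $C(\bar x)$ is sorted non-decreasingly for all $\bar x\in\{0,1\}^n$. A comparator $(i,j)\in L_\ell$ is redundant if for every input $\bar x$ we have $(\bar x_{\ell-1})_i\le(\bar x_{\ell-1})_j$. The blocks of $C$ are the vertex sets of the connected components of the graph on $\{1,\ldots,n\}$ with an edge $\{i,j\}$ for each comparator $(i,j)$ in the last layer $L_d$. *)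

(* Defs.v *)
(* Channels are 0-indexed: 'I_n stands for {1,...,n}. *)
From mathcomp Require Import all_boot.
Set Implicit Arguments. Unset Strict Implicit. Unset Printing Implicit Defensive.

Definition comparator (n : nat) := ('I_n * 'I_n)%type.
Definition layer (n : nat) := {set comparator n}.
Definition network (n : nat) := seq (layer n).

Definition valid_layer n (L : layer n) : Prop :=
  (forall c, c \in L -> c.1 < c.2) /\
  (forall c c', c \in L -> c' \in L -> c != c' ->
     [/\ c.1 != c'.1, c.1 != c'.2, c.2 != c'.1 & c.2 != c'.2]).

Definition valid_network n (C : network n) : Prop :=
  forall L, L \in C -> valid_layer L.

Definition apply_layer n (L : layer n) (x : {ffun 'I_n -> bool}) :
  {ffun 'I_n -> bool} :=
  [ffun k => match [pick c in L | (c.1 == k) || (c.2 == k)] with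
             | Some c => if c.1 == k then x c.1 && x c.2 else x c.1 || x c.2
             | None => x k
             end].

Definition state n (C : network n) (x : {ffun 'I_n -> bool}) (k : nat) :=
  foldl (fun y L => apply_layer L y) x (take k C).

Definition output n (C : network n) x := state C x (size C).

Definition sorted_bits n (y : {ffun 'I_n -> bool}) : Prop :=
  forall i j : 'I_n, i <= j -> (y i <= y j)%N.

Definition sorting_network n (C : network n) : Prop :=
  forall x, sorted_bits (output C x).

(* Comparator c in layer L_(l+1) (0-based index l) is redundant. *)
Definition redundant n (C : network n) (l : nat) (c : comparator n) : Prop :=
  forall x, (state C x l c.1 <= state C x l c.2)%N.

Definition no_redundant n (C : network n) : Prop :=
  forall l, l < size C -> forall c, c \in nth set0 C l -> ~ redundant C l c.

(* Blocks: connected components of the graph whose edges are the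
   comparators of the last layer. *)
Definition last_edge n (C : network n) : rel 'I_n :=
  fun a b => ((a, b) \in last set0 C) || ((b, a) \in last set0 C).

Definition same_block n (C : network n) (a b : 'I_n) : bool :=
  connect (last_edge C) a b.

(* Main.v *)
Require Import Defs.
From mathcomp Require Import all_boot zify.
From Stdlib Require Import FunctionalExtensionality.
Set Implicit Arguments. Unset Strict Implicit. Unset Printing Implicit Defensive.

Section S.
Variable n : nat.

Definition applyN (L : layer n) (F : 'I_n -> nat) : 'I_n -> nat :=
  fun k => match [pick c in L | (c.1 == k) || (c.2 == k)] with
             | Some c => if c.1 == k then minn (F c.1) (F c.2) else maxn (F c.1) (F c.2)
             | None => F k
             end.

Definition thr (t : nat) (F : 'I_n -> nat) : {ffun 'I_n -> bool} := [ffun k => t <= F k].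

Lemma thr_apply L F t : apply_layer L (thr t F) = thr t (applyN L F).
Proof.
apply/ffunP => k; rewrite !ffunE /applyN; case: pickP => [c _|_]; rewrite ?ffunE //.
by case: ifP => _; rewrite ?ffunE ?leq_min ?leq_max.
Qed.

Definition stateN (C : network n) F l := foldl (fun G L => applyN L G) F (take l C).

Lemma thr_state C F t l : state C (thr t F) l = thr t (stateN C F l).
Proof.
rewrite /state /stateN; elim: (take l C) F => [|L s IH] F //=.
by rewrite thr_apply IH.
Qed.

Lemma sortedN C F (i j : 'I_n) : sorting_network C -> i <= j ->
  stateN C F (size C) i <= stateN C F (size C) j.
Proof.
move=> H hij; have := H (thr (stateN C F (size C) i) F) i j hij.
by rewrite /output thr_state !ffunE leqnn; case: (leqP (stateN C F (size C) i) (stateN C F (size C) j)).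
Qed.

Definition rho (L : layer n) (F : 'I_n -> nat) (k : 'I_n) : 'I_n :=
  match [pick c in L | (c.1 == k) || (c.2 == k)] with
  | Some c => if c.1 == k then (if F c.1 <= F c.2 then c.1 else c.2)
              else (if F c.1 <= F c.2 then c.2 else c.1)
  | None => k
  end.

Lemma applyN_rho L F k : applyN L F k = F (rho L F k).
Proof.
rewrite /applyN /rho; case: pickP => // c _.
by case: ifP => _; case: leqP => h; lia.
Qed.

Lemma disj (L : layer n) c c' r : valid_layer L -> c \in L -> c' \in L ->
  (c.1 == r) || (c.2 == r) -> (c'.1 == r) || (c'.2 == r) -> c = c'.
Proof.
move=> [_ Hd] cL c'L; case: (eqVneq c c') => // ne.
have [h1 h2 h3 h4] := Hd c c' cL c'L ne.
by move=> /orP[/eqP e|/eqP e] /orP[/eqP e'|/eqP e']; move: h1 h2 h3 h4; rewrite e e' eqxx.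
Qed.

Lemma rho_inj L F : valid_layer L -> injective (rho L F).
Proof.
move=> V k1 k2; rewrite /rho.
case: pickP => [[p1 q1] /andP[c1L t1] | n1]; case: pickP => [[p2 q2] /andP[c2L t2] | n2] /=.
- move: t1 t2 => /= t1 t2 e.
  have E : (p1, q1) = (p2, q2).
    apply: (disj (r := if p1 == k1 then (if F p1 <= F q1 then p1 else q1) else (if F p1 <= F q1 then q1 else p1))) V c1L c2L _ _ => /=.
      by case: ifP => _; case: ifP => _; rewrite eqxx ?orbT.
    by rewrite e; case: ifP => _; case: ifP => _; rewrite eqxx ?orbT.
  move: c2L t2 e; case: E => <- <- c2L t2 e.
  have lt1 := (V.1 _ c1L); rewrite /= in lt1.
  have qp : (q1 == p1) = false by apply/eqP => h; move: lt1; rewrite h ltnn.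
  have qp2 : (p1 == q1) = false by apply/eqP => h; move: lt1; rewrite h ltnn.
  move: t1 t2 e => /orP[/eqP<-|/eqP<-] /orP[/eqP<-|/eqP<-]; rewrite ?eqxx ?qp ?qp2 //;
    by case: ifP => // _ ->.
- move: t1 => /= t1 e.
  have := n2 (p1, q1); rewrite c1L /=.
  move: e t1; case: ifP => _; case: ifP => _ <- //; rewrite eqxx ?orbT //.
- move: t2 => /= t2 e.
  have := n1 (p2, q2); rewrite c2L /=.
  move: e t2; case: ifP => _; case: ifP => _ -> //; rewrite eqxx ?orbT //.
- done.
Qed.

Lemma rho_edge L F k : rho L F k = k \/ (k, rho L F k) \in L \/ (rho L F k, k) \in L.
Proof.
rewrite /rho; case: pickP => [[p q] /andP[cL t] | _] /=; last by left.
move: t => /orP[/eqP e|/eqP e]; subst k; rewrite ?eqxx.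
  by case: ifP => _; [left|right;left].
case: ifP => [/eqP->|_]; first by case: ifP => _; left.
by case: ifP => _; [left|right;right].
Qed.

Lemma pick_unique (L : layer n) c k : valid_layer L -> c \in L -> (c.1 == k) || (c.2 == k) ->
  [pick c' in L | (c'.1 == k) || (c'.2 == k)] = Some c.
Proof.
move=> V cL t; case: pickP => [c' /andP[c'L t'] | H].
  by rewrite (disj V c'L cL t' t).
by move: (H c); rewrite cL t.
Qed.

Lemma applyN1 L F c : valid_layer L -> c \in L -> applyN L F c.1 = minn (F c.1) (F c.2).
Proof. by move=> V cL; rewrite /applyN (pick_unique V cL) ?eqxx. Qed.

Lemma applyN2 L F c : valid_layer L -> c \in L -> applyN L F c.2 = maxn (F c.1) (F c.2).
Proof.
move=> V cL; rewrite /applyN (pick_unique V cL) ?eqxx ?orbT //.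
have lt1 := (V.1 _ cL).
have -> : (c.1 == c.2) = false by apply/eqP => h; move: lt1; rewrite h ltnn.
done.
Qed.


Lemma stateN_rcons C F l : l < size C ->
  stateN C F l.+1 = applyN (nth set0 C l) (stateN C F l).
Proof. by move=> h; rewrite /stateN (take_nth set0 h) foldl_rcons. Qed.

Lemma stateN_rho C F l : valid_network C ->
  exists R : 'I_n -> 'I_n, injective R /\ forall k, stateN C F l k = F (R k).
Proof.
rewrite /stateN => V.
have : forall L, L \in take l C -> valid_layer L by move=> L /mem_take; apply: V.
elim: (take l C) F => [|L s IH] F Vs /=; first by exists id; split.
have [R [iR eR]] := IH (applyN L F) (fun L' h => Vs L' (mem_behead (s := L :: s) h)).
exists (rho L F \o R); split.
  by apply: inj_comp => //; apply: rho_inj; apply: Vs; rewrite inE eqxx.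
by move=> k; rewrite eR applyN_rho.
Qed.

Lemma mono_fix (L : layer n) F : (forall c, c \in L -> c.1 < c.2) ->
  (forall u v : 'I_n, u <= v -> F u <= F v) -> applyN L F = F.
Proof.
move=> H M; apply: functional_extensionality => k; rewrite /applyN.
case: pickP => // c /andP[cL t].
have := M _ _ (ltnW (H c cL)).
by move: t => /orP[/eqP e|/eqP e]; case: ifP => [/eqP e'|ne]; subst k; rewrite ?e' //; try lia; rewrite eqxx in ne.
Qed.

Lemma stateN_mono C F l : valid_network C ->
  (forall u v : 'I_n, u <= v -> F u <= F v) -> stateN C F l = F.
Proof.
rewrite /stateN => V M.
have : forall L, L \in take l C -> valid_layer L by move=> L /mem_take; apply: V.
elim: (take l C) => [|L s IH] Vs //=.
rewrite mono_fix ?IH //; first by move=> L' h; apply: Vs; rewrite inE h orbT.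
by move=> c; apply: (Vs L (mem_head _ _)).1.
Qed.

Definition sig (a b v : nat) := if v == a then b else if v == b then a else v.
Definition pr (a b u v : nat) := ((u == a) && (v == b)) || ((u == b) && (v == a)).

Lemma sig_min_pair a b u v : a < b -> ~~ (a < u < b) -> ~~ (a < v < b) -> ~~ pr a b u v ->
  minn (sig a b u) (sig a b v) = sig a b (minn u v) /\ maxn (sig a b u) (sig a b v) = sig a b (maxn u v).
Proof.
move=> ab; rewrite /sig /pr; repeat (case: eqP => ? /=); try done; split; lia.
Qed.

Lemma sig_pair a b u v : a < b -> pr a b u v ->
  minn (sig a b u) (sig a b v) = minn u v /\ maxn (sig a b u) (sig a b v) = maxn u v.
Proof.
rewrite /sig /pr => ab /orP[/andP[/eqP-> /eqP->]|/andP[/eqP-> /eqP->]]; rewrite eqxx.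
  by rewrite (gtn_eqF ab) eqxx; split; lia.
by rewrite (gtn_eqF ab) eqxx; split; lia.
Qed.

Lemma sig_fix a b u : u != a -> u != b -> sig a b u = u.
Proof. by rewrite /sig => /negbTE-> /negbTE->. Qed.

Lemma swap_step (L : layer n) F a b : valid_layer L -> injective F -> a < b ->
  (forall k, ~~ (a < F k < b)) ->
  applyN L (sig a b \o F) = sig a b \o applyN L F \/ applyN L (sig a b \o F) = applyN L F.
Proof.
move=> V iF ab Hr.
case: (boolP [exists c in L, pr a b (F c.1) (F c.2)]).
- move/existsP => [c0 /andP[c0L h0]]; right.
  have nab : forall x, x != c0.1 -> x != c0.2 -> (F x != a) && (F x != b).
    move=> x h1 h2; move: h0; rewrite /pr => /orP[/andP[/eqP e1 /eqP e2]|/andP[/eqP e1 /eqP e2]].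
      apply/andP; split; apply/eqP => e.
        by move: h1; rewrite (iF _ _ (etrans e (esym e1))) eqxx.
      by move: h2; rewrite (iF _ _ (etrans e (esym e2))) eqxx.
    apply/andP; split; apply/eqP => e.
      by move: h2; rewrite (iF _ _ (etrans e (esym e2))) eqxx.
    by move: h1; rewrite (iF _ _ (etrans e (esym e1))) eqxx.
  apply: functional_extensionality => k; rewrite /applyN.
  case: pickP => [c /andP[cL t] | N] /=.
  + case: (boolP (pr a b (F c.1) (F c.2))) => hc.
      by have [-> ->] := sig_pair ab hc.
    have cne : c != c0 by apply: contraNneq hc => ->.
    have [d1 d2 d3 d4] := V.2 c c0 cL c0L cne.
    have /andP[n1 n2] := nab _ d1 d2.
    have /andP[n3 n4] := nab _ d3 d4.
    by rewrite !sig_fix.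
  + have := N c0; rewrite c0L /= => /negbT; rewrite negb_or => /andP[h1 h2].
    have h1' : k != c0.1 by rewrite eq_sym.
    have h2' : k != c0.2 by rewrite eq_sym.
    have /andP[n1 n2] := nab k h1' h2'.
    by rewrite sig_fix.
- move/existsPn => H; left.
  apply: functional_extensionality => k; rewrite /applyN /=.
  case: pickP => [c /andP[cL t] | N] //=.
  have := H c; rewrite cL /= => hc.
  have [-> ->] := sig_min_pair ab (Hr c.1) (Hr c.2) hc.
  by case: ifP.
Qed.


Lemma sigK a b : a != b -> cancel (sig a b) (sig a b).
Proof.
move=> ab x; rewrite /sig; case: (x =P a) => [->|xa]; first by rewrite eq_sym (negbTE ab) eqxx.
case: (x =P b) => [->|xb]; first by rewrite eqxx.
by move/eqP: xa => /negbTE->; move/eqP: xb => /negbTE->.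
Qed.

Lemma sig_lt a b x y : a < b -> ~~ (a < x < b) -> ~~ (a < y < b) ->
  sig a b y < sig a b x -> y < x \/ (x = a /\ y = b).
Proof. move=> ab; rewrite /sig; repeat (case: eqP => ? /=); try done; lia. Qed.

Lemma sig_lt2 a b x y : a < b -> ~~ (a < x < b) -> ~~ (a < y < b) ->
  y < x -> ~~ (sig a b y < sig a b x) -> x = b /\ y = a.
Proof. move=> ab; rewrite /sig; repeat (case: eqP => ? /=); try done; lia. Qed.

Lemma applyN_comp L F : applyN L F = F \o rho L F.
Proof. by apply: functional_extensionality => k; rewrite applyN_rho. Qed.

Lemma swap_run C F a b l : valid_network C -> injective F -> a < b ->
  (forall k, ~~ (a < F k < b)) ->
  stateN C (sig a b \o F) l = sig a b \o stateN C F l \/ stateN C (sig a b \o F) l = stateN C F l.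
Proof.
rewrite /stateN => V iF ab Hr.
have : forall L, L \in take l C -> valid_layer L by move=> L /mem_take; apply: V.
move=> Vs.
suff : forall G, G = sig a b \o F \/ G = F ->
  foldl (fun G L => applyN L G) G (take l C) = sig a b \o foldl (fun G L => applyN L G) F (take l C) \/
  foldl (fun G L => applyN L G) G (take l C) = foldl (fun G L => applyN L G) F (take l C) by apply; left.
move: Vs; elim: (take l C) F iF Hr => [|L s IH] F iF Hr Vs G HG /=; first exact: HG.
have VL : valid_layer L by apply: Vs; rewrite inE eqxx.
apply: IH.
- by rewrite applyN_comp; apply: inj_comp => //; apply: rho_inj.
- by move=> k; rewrite applyN_rho.
- by move=> L' h; apply: Vs; rewrite inE h orbT.
- case: HG => ->; last by right.
  exact: swap_step.
Qed.

Lemma state_avoid C F l a b : valid_network C -> (forall k, ~~ (a < F k < b)) ->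
  forall k, ~~ (a < stateN C F l k < b).
Proof. by move=> V Hr k; have [R [_ ->]] := stateN_rho F l V. Qed.

Lemma state_inj C F l : valid_network C -> injective F -> injective (stateN C F l).
Proof.
move=> V iF u v; have [R [iR eR]] := stateN_rho F l V.
by rewrite !eR => /iF /iR.
Qed.

Definition inv (G : 'I_n -> nat) := #|[set p : 'I_n * 'I_n | (p.1 < p.2) && (G p.2 < G p.1)]|.

Definition concl C l (i j : 'I_n) :=
  exists G a b, [/\ injective G, a < b, (forall k, ~~ (a < G k < b)),
     stateN C G l i = b & stateN C G l j = a].

Lemma chain_step C l (i j : 'I_n) G : valid_network C -> i < j -> injective G ->
  stateN C G l j < stateN C G l i ->
  concl C l i j \/ exists G', [/\ injective G', stateN C G' l j < stateN C G' l i & inv G' < inv G].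
Proof.
move=> V ij iG hP.
case: (boolP [exists p : 'I_n * 'I_n, (p.1 < p.2) && (G p.2 < G p.1)]); last first.
  move/existsPn => H.
  have M : forall u v : 'I_n, u <= v -> G u <= G v.
    move=> u v; rewrite leq_eqVlt => /orP[/eqP/val_inj->//|uv].
    have := H (u, v); rewrite /= uv /=; case: leqP => //.
  move: hP; rewrite stateN_mono // => h.
  by have := M _ _ (ltnW ij); lia.
case/existsP => p0 hp0.
case: (@arg_minnP _ p0 (fun p : 'I_n * 'I_n => (p.1 < p.2) && (G p.2 < G p.1)) (fun p : 'I_n * 'I_n => G p.1 - G p.2) hp0) => [[u v]] /= /andP[uv vu] hmin.
set a := G v; set b := G u.
have ab : a < b by [].
have Hr : forall k, ~~ (a < G k < b).
  move=> k; apply/negP => /andP[h1 h2].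
  case: (ltngtP u k) => [uk|ku|ek].
  - have := hmin (u, k); rewrite /= uk h2 /= => /(_ isT); rewrite /a /b in h1 h2 *; lia.
  - have kv : k < v by apply: ltn_trans ku uv.
    have := hmin (k, v); rewrite /= kv h1 /= => /(_ isT); rewrite /a /b in h1 h2 *; lia.
  - by move: h2; rewrite /b (_ : u = k) ?ltnn //; apply: val_inj.
have abn : a != b by rewrite neq_ltn ab.
have iG' : injective (sig a b \o G) by apply: inj_comp => //; apply: can_inj (sigK abn).
have Hinv : inv (sig a b \o G) < inv G.
  apply: proper_card; apply/properP; split.
    apply/subsetP => [[x y]]; rewrite !inE /= => /andP[xy].
    case/(sig_lt ab (Hr x) (Hr y)) => [->|[ex ey]]; first by rewrite xy.
    have ex' : x = v by apply: iG.
    have ey' : y = u by apply: iG.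
    by move: xy; rewrite ex' ey'; lia.
  exists (u, v); rewrite !inE /= ?uv ?vu //.
  rewrite /sig /a /b eqxx; case: eqP => [e|_]; first by move: ab; rewrite /a /b e ltnn.
  by rewrite eqxx; lia.
case: (boolP (stateN C (sig a b \o G) l j < stateN C (sig a b \o G) l i)) => h.
  by right; exists (sig a b \o G).
have Hs := state_avoid l V Hr.
case: (swap_run l V iG ab Hr) => e; rewrite e in h; last by rewrite hP in h.
have [e1 e2] := sig_lt2 ab (Hs i) (Hs j) hP h.
by left; exists G, a, b.
Qed.

Lemma chain C l (i j : 'I_n) G : valid_network C -> i < j -> injective G ->
  stateN C G l j < stateN C G l i -> concl C l i j.
Proof.
move=> V ij; move: {2}(inv G) (leqnn (inv G)) => N.
elim: N G => [|N IH] G hN iG hP.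
  case: (chain_step V ij iG hP) => // -[G' [_ _ h]]; lia.
case: (chain_step V ij iG hP) => // -[G' [iG' hP' h]].
by apply: (IH G') => //; lia.
Qed.

Lemma adj_pos (o : 'I_n -> nat) a b (P Q : 'I_n) : injective o ->
  (forall i j : 'I_n, i <= j -> o i <= o j) -> (forall k, ~~ (a < o k < b)) -> a < b ->
  o P = a -> o Q = b -> nat_of_ord Q = P.+1.
Proof.
move=> io so Hr ab eP eQ.
have PQ : P < Q.
  case: (leqP Q P) => // h; have := so _ _ h; rewrite eP eQ; lia.
case: (ltngtP (P.+1) Q) => // h; last by lia.
have mn : P.+1 < n by apply: ltn_trans h (ltn_ord Q).
set m := Ordinal mn.
have h1 := so P m (leqnSn P).
have h2 := so m Q (ltnW h).
have n1 : o m != o P by apply/eqP => /io /(congr1 val) /= e; lia.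
have n2 : o m != o Q by apply/eqP => /io /(congr1 val) /= e; lia.
have := Hr m; rewrite eP eQ in h1 h2 n1 n2; lia.
Qed.

Lemma nonred_concl C l c : valid_network C -> l < size C -> c \in nth set0 C l ->
  ~ redundant C l c -> concl C l c.1 c.2.
Proof.
move=> V hl cL NR.
have lt12 : c.1 < c.2 by apply: (V _ (mem_nth set0 hl)).1.
have : ~~ [forall x, state C x l c.1 <= state C x l c.2].
  by apply/negP => /forallP H; apply: NR => x; apply: H.
case/forallPn => x hx.
set F := fun k : 'I_n => x k * n + k.
have iF : injective F.
  move=> u v; rewrite /F => e; apply: val_inj => /=.
  have := ltn_ord u; have := ltn_ord v; case: (x u) e; case: (x v) => /= e; lia.
have tF : thr n F = x.
  apply/ffunP => k; rewrite ffunE /F; have := ltn_ord k; case: (x k) => /= h; lia.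
move: hx; rewrite -tF !thr_state !ffunE => hx.
apply: (chain V lt12 iF).
move: hx; case: (leqP n (stateN C F l c.1)) => h1; case: (leqP n (stateN C F l c.2)) => h2 // _; lia.
Qed.

End S.

Lemma last_adj n d (C : network n) : valid_network C -> size C = d -> 1 <= d ->
  sorting_network C -> no_redundant C ->
  forall c, c \in nth set0 C d.-1 -> nat_of_ord c.2 = (nat_of_ord c.1).+1.
Proof.
move=> V hs hd S NR c cL.
have hl : d.-1 < size C by rewrite hs; lia.
have [G [a [b [iG ab Hr e1 e2]]]] := nonred_concl V hl cL (NR _ hl c cL).
have VL : valid_layer (nth set0 C d.-1) by apply: V; apply: mem_nth.
have ho := stateN_rcons G hl.
rewrite prednK // in ho.
have o1 : stateN C G d c.1 = a by rewrite ho applyN1 // e1 e2; lia.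
have o2 : stateN C G d c.2 = b by rewrite ho applyN2 // e1 e2; lia.
apply: (adj_pos (o := stateN C G d) (a := a) (b := b)) => //.
- exact: state_inj.
- by move=> i j ij; rewrite -hs; apply: sortedN.
- exact: state_avoid.
Qed.


Unset Implicit Arguments.

Theorem lemma5 (n d : nat) (C : network n) :
  valid_network C -> size C = d -> 2 <= d ->
  sorting_network C -> no_redundant C ->
  forall c : comparator n, c \in nth set0 C (d - 2) ->
  forall m : 'I_n, c.1 < m < c.2 ->
    same_block C m c.1 || same_block C m c.2.
Proof.
move=> V hs hd S NR c cL m hm.
have hl : d - 2 < size C by rewrite hs; lia.
have [G [a [b [iG ab Hr e1 e2]]]] := nonred_concl V hl cL (NR _ hl c cL).
have VL : valid_layer (nth set0 C (d - 2)) by apply: V; apply: mem_nth.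
have hl1 : d.-1 < size C by rewrite hs; lia.
have VL1 : valid_layer (nth set0 C d.-1) by apply: V; apply: mem_nth.
have hw := stateN_rcons G hl.
rewrite (_ : (d - 2).+1 = d.-1) in hw; last by lia.
have w1 : stateN C G d.-1 c.1 = a by rewrite hw applyN1 // e1 e2; lia.
have w2 : stateN C G d.-1 c.2 = b by rewrite hw applyN2 // e1 e2; lia.
have ho := stateN_rcons G hl1.
rewrite prednK in ho; last by lia.
set w := stateN C G d.-1 in w1 w2 ho.
set Ld := nth set0 C d.-1 in VL1 ho.
have hLd : Ld = last set0 C by rewrite -nth_last hs.
have [ri ri1 ri2] := injF_bij (rho_inj (F := w) VL1).
set P := ri c.1; set Q := ri c.2.
have oP : stateN C G d P = a by rewrite ho applyN_rho /P ri2.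
have oQ : stateN C G d Q = b by rewrite ho applyN_rho /Q ri2.
have PQ : nat_of_ord Q = P.+1.
  apply: (adj_pos (o := stateN C G d) (a := a) (b := b)) => //.
  - exact: state_inj.
  - by move=> i j ij; rewrite -hs; apply: sortedN.
  - exact: state_avoid.
have adj := last_adj V hs (ltnW hd) S NR.
have HP : (nat_of_ord P = c.1 \/ nat_of_ord c.1 = P.+1 \/ nat_of_ord P = (nat_of_ord c.1).+1) /\
          (nat_of_ord P != c.1 -> last_edge C P c.1).
  have := rho_edge Ld w P; rewrite /P ri2 -/P.
  case=> [e|[e|e]]; split.
  - by left; rewrite e.
  - by rewrite e eqxx.
  - by right; left; apply: adj e.
  - by move=> _; rewrite /last_edge -hLd e.
  - by right; right; apply: adj e.
  - by move=> _; rewrite /last_edge -hLd e orbT.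
have HQ : (nat_of_ord Q = c.2 \/ nat_of_ord c.2 = Q.+1 \/ nat_of_ord Q = (nat_of_ord c.2).+1) /\
          (nat_of_ord Q != c.2 -> last_edge C Q c.2).
  have := rho_edge Ld w Q; rewrite /Q ri2 -/Q.
  case=> [e|[e|e]]; split.
  - by left; rewrite e.
  - by rewrite e eqxx.
  - by right; left; apply: adj e.
  - by move=> _; rewrite /last_edge -hLd e.
  - by right; right; apply: adj e.
  - by move=> _; rewrite /last_edge -hLd e orbT.
case: HP => HPa HPe; case: HQ => HQa HQe.
have : (nat_of_ord m = P /\ nat_of_ord P <> c.1) \/ (nat_of_ord m = Q /\ nat_of_ord Q <> c.2) by lia.
case=> [[mP nP]|[mQ nQ]].
  have -> : m = P by apply: val_inj.
  apply/orP; left; apply: connect1; apply: HPe; apply/eqP => e; apply: nP; rewrite e.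
  done.
have -> : m = Q by apply: val_inj.
apply/orP; right; apply: connect1; apply: HQe; apply/eqP => e; apply: nQ; rewrite e.
done.
Qed.
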